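(* Let $(\Omega,\mathcal E_\Omega,\mathbb P)$ be a probability space with data $X_{1:T}$, $\Theta$ a Borel subset of $\mathbf R^p$ with Borel $\sigma$-algebra, $\theta_0\in\Theta$, and $\theta^*_{T,C}$ a $\Theta$-valued random vector with $\theta^*_{T,C}\to\theta_0$ in $\mathbb P$-probability as $T\to\infty$. Let $\rho_P$ be the Prokhorov metric on probability measures on $\Theta$. Then: (i) $\rho_P(\delta_{\theta^*_{T,C}},\delta_{\theta_0})\to0$ in probability as $T\to\infty$; (ii) if moreover $u:\mathbf R^p\times\mathbf R^p\to\mathbf R_+$ satisfies: (a) $u=0$ outside $\Theta^2$ and $\theta\mapsto u(\theta,\dot\theta)$ is Borel measurable for each $\dot\theta\in\Theta$; (b) for each $\dot\theta\in\Theta$, $\theta\mapsto u(\dot\theta,\theta)$ is continuous in a neighborhood of $\theta_0$; (c) there is $r_1>0$ with $\int_\Theta\sup_{\dot\theta\in B_{r_1}(\theta_0)}u(\theta,\dot\theta)\,\lambda(d\theta)<\infty$; (d) there is $r_2>0$ with $\int_\Theta u(\theta,\dot\theta)\,\lambda(d\theta)>0$ for all $\dot\theta\in B_{r_2}(\theta_0)$; then, as $T\to\infty$, $$\rho_P\Big(\frac{\int_\cdot u(\theta,\theta^*_{T,C})\lambda(d\theta)}{\int_\Theta u(\dot\theta,\theta^*_{T,C})\lambda(d\dot\theta)},\ \frac{\int_\cdot u(\theta,\theta_0)\lambda(d\theta)}{\int_\Theta u(\dot\theta,\theta_0)\lambda(d\dot\theta)}\Big)\to0\ \text{in probability}.$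$
   Context: $\lambda$ is Lebesgue measure, $\delta_x$ the Dirac measure at $x$, and $B_r(\theta_0)$ the ball in $\Theta$ of radius $r$ centred at $\theta_0$. The displayed ratios denote probability measures $B\mapsto\int_B u(\theta,\cdot)\lambda(d\theta)/\int_\Theta u(\dot\theta,\cdot)\lambda(d\dot\theta)$ on Borel subsets of $\Theta$. *)

(* Defs.v *)
From HB Require Import structures.
From mathcomp Require Import all_boot all_order all_algebra.
From mathcomp Require Import all_classical all_reals all_analysis.
Set Implicit Arguments. Unset Strict Implicit. Unset Printing Implicit Defensive.
Import Order.TTheory GRing.Theory Num.Theory.
Local Open Scope classical_set_scope.
Local Open Scope ring_scope.

(* R^p is modelled as p.-tuple R, with the library's product (= Borel) sigma-algebra. *)

Definition eudist (R : realType) (p : nat) (x y : p.-tuple R) : R :=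
  Num.sqrt (\sum_(i < p) (tnth x i - tnth y i) ^+ 2).

Definition is_lebesgue (R : realType) (p : nat)
  (lam : set (p.-tuple R) -> \bar R) : Prop :=
  forall a b : p.-tuple R, (forall i, tnth a i <= tnth b i) ->
    lam [set x | forall i, tnth a i <= tnth x i <= tnth b i] =
    (\prod_(i < p) (tnth b i - tnth a i))%:E.

Definition ballT (R : realType) (p : nat) (Theta : set (p.-tuple R))
  (t0 : p.-tuple R) (r : R) : set (p.-tuple R) :=
  [set x | Theta x /\ eudist x t0 < r].

Definition enlarge (R : realType) (p : nat) (Theta : set (p.-tuple R))
  (A : set (p.-tuple R)) (e : R) : set (p.-tuple R) :=
  [set x | Theta x /\ exists2 y, A y & eudist x y < e].

Definition prokhorov (R : realType) (p : nat) (Theta : set (p.-tuple R))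
  (mu nu : set (p.-tuple R) -> \bar R) : \bar R :=
  ereal_inf [set e%:E | e in [set e : R | 0 < e /\
     forall A : set (p.-tuple R), measurable A -> A `<=` Theta ->
       (mu A <= nu (enlarge Theta A e) + e%:E)%E /\
       (nu A <= mu (enlarge Theta A e) + e%:E)%E]].

Definition post (R : realType) (p : nat) (lam : {measure set (p.-tuple R) -> \bar R})
  (Theta : set (p.-tuple R)) (u : p.-tuple R -> p.-tuple R -> R) (x : p.-tuple R)
  : set (p.-tuple R) -> \bar R :=
  fun B => (fine (\int[lam]_(th in B) (u th x)%:E) /
            fine (\int[lam]_(th in Theta) (u th x)%:E))%:E.

(* outer probability (coincides with P on measurable sets) *)
Definition outerP (d : measure_display) (Omega : measurableType d) (R : realType)
  (P : probability Omega R) (A : set Omega) : \bar R :=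
  ereal_inf [set P B | B in [set B | measurable B /\ A `<=` B]].

(* Main.v *)
Require Import Defs.
From HB Require Import structures.
From mathcomp Require Import all_boot all_order all_algebra.
From mathcomp Require Import all_classical all_reals all_analysis.
From mathcomp Require Import measurable_realfun.
From mathcomp Require Import lra.
Import Order.TTheory GRing.Theory Num.Theory.
Local Open Scope classical_set_scope.
Local Open Scope ring_scope.
Local Open Scope ereal_scope.

Lemma le_int_nm d (T : measurableType d) (R : realType) (mu : {measure set T -> \bar R})
  (f g : T -> \bar R) : (forall x, 0 <= f x) -> (forall x, f x <= g x) ->
  \int[mu]_x f x <= \int[mu]_x g x.
Proof.
move=> f0 fg.
have g0 x : 0 <= g x by apply: le_trans (fg x).
rewrite /integral /=.
have f0' : forall x, setT x -> 0 <= f x by move=> x _; exact: f0.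
have g0' : forall x, setT x -> 0 <= g x by move=> x _; exact: g0.
have fp x : (f \_ setT)^\+ x = f x.
  by rewrite patch_setT (ge0_funeposE f0' (in_setT x)).
have gp x : (g \_ setT)^\+ x = g x.
  by rewrite patch_setT (ge0_funeposE g0' (in_setT x)).
have fn x : (f \_ setT)^\- x = 0.
  by rewrite patch_setT (ge0_funenegE f0' (in_setT x)).
have gn x : (g \_ setT)^\- x = 0.
  by rewrite patch_setT (ge0_funenegE g0' (in_setT x)).
apply: leeB.
  apply: le_ereal_sup => _ [h hf <-]; exists h => //= x.
  by rewrite gp; apply: le_trans (hf x) _; rewrite fp.
apply: le_ereal_sup => _ [h hf <-]; exists h => //= x.
by rewrite fn; apply: le_trans (hf x) _; rewrite gn.
Qed.

Lemma le_int_set d (T : measurableType d) (R : realType) (mu : {measure set T -> \bar R})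
  (D1 D2 : set T) (f g : T -> \bar R) : (forall x, 0 <= f x) -> (forall x, 0 <= g x) -> (forall x, D1 x -> f x <= g x) ->
  D1 `<=` D2 ->
  \int[mu]_(x in D1) f x <= \int[mu]_(x in D2) g x.
Proof.
move=> f0 g0 fg D12; rewrite (integral_mkcond D1) (integral_mkcond D2).
apply: le_int_nm => x; rewrite /patch.
  by case: ifP.
case: (boolP (x \in D1)) => xD1; last first.
  by case: ifP.
have xD2 : x \in D2 by apply/mem_set; apply: D12; exact/set_mem.
rewrite xD2; apply: fg; exact/set_mem.
Qed.

Local Open Scope ring_scope.
Lemma meas_dist d (Omega: measurableType d) (R: realType) p (f : Omega -> p.-tuple R)
  (t0 : p.-tuple R) (c : R) : measurable_fun setT f ->
  measurable [set w | c < eudist (f w) t0].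
Proof.
move=> mf.
have mg : measurable_fun setT (fun w => eudist (f w) t0).
  rewrite /eudist; apply: (@measurableT_comp _ _ _ _ _ _ (@Num.sqrt R) _
     (fun w => \sum_(i < p) (tnth (f w) i - tnth t0 i) ^+ 2)).
    by apply: measurable_realfun.continuous_measurable_fun; exact: sqrt_continuous.
  apply: measurable_sum => i; apply: measurable_realfun.measurable_funX; apply: measurable_realfun.measurable_funB => //.
  exact: (measurable_fun_tnthP f).1 mf i.
have := mg measurableT `]c, +oo[%classic (measurable_itv _).
rewrite setTI; congr measurable; apply/seteqP; split=> w /=;
  by rewrite in_itv /= andbT.
Qed.

Lemma eudist_ge0 (R : realType) p (x y : p.-tuple R) : 0 <= eudist x y.
Proof. exact: sqrtr_ge0. Qed.

Lemma eudist_xx (R : realType) p (x : p.-tuple R) : eudist x x = 0.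
Proof.
rewrite /eudist big1 ?sqrtr0// => i _; by rewrite subrr expr0n.
Qed.

Lemma eudist_sym (R : realType) p (x y : p.-tuple R) : eudist x y = eudist y x.
Proof.
rewrite /eudist; congr Num.sqrt; apply: eq_bigr => i _.
by rewrite -sqrrN opprB.
Qed.

Lemma conclude (R : realType) (d : measure_display) (Omega : measurableType d)
  (P : probability Omega R) (p : nat) (theta0 : p.-tuple R)
  (thstar : nat -> Omega -> p.-tuple R)
  (mthstar : forall T, measurable_fun setT (thstar T))
  (cvg_thstar : forall e : R, 0 < e ->
     (fun T => P [set w | e < eudist (thstar T w) theta0]) @ \oo --> 0%E)
  (F : nat -> Omega -> \bar R) (e : R) :
  (exists2 del : R, 0 < del & forall T w, eudist (thstar T w) theta0 < del ->
     (F T w <= e%:E)%E) ->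
  (fun T => outerP P [set w | (e%:E < F T w)%E]) @ \oo --> 0%E.
Proof.
move=> [del del0 hdel].
have del20 : 0 < del / 2 by rewrite divr_gt0.
apply: (@squeeze_cvge _ _ _ _ (cst 0%E) _
  (fun T => P [set w | del / 2 < eudist (thstar T w) theta0])); last 2 first.
- exact: cvg_cst.
- exact: cvg_thstar.
apply: nearW => T; apply/andP; split.
  apply: le_ereal_inf_tmp => _ [B [mB _] <-]; exact: measure_ge0.
apply: ereal_inf_le; exists (P [set w | del / 2 < eudist (thstar T w) theta0]) => //.
exists [set w | del / 2 < eudist (thstar T w) theta0] => //.
split; first exact: meas_dist.
move=> w /= hw; have : ~ (eudist (thstar T w) theta0 < del).
  by move=> /hdel; rewrite leNgt hw.
move/negP; rewrite -leNgt => h; apply: lt_le_trans h.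
by rewrite ltr_pdivrMr// ltr_pMr// ltr1n.
Qed.

Lemma bool_le (R : realType) (a b : bool) (e : R) : 0 < e -> (a -> b) ->
  ((a%:R)%:E <= (b%:R)%:E + e%:E)%E.
Proof.
move=> e0; case: a => [/(_ isT) ->|_]; rewrite -EFinD lee_fin.
  by rewrite lerDl ltW.
by apply: addr_ge0; [case: b|exact: ltW].
Qed.

Lemma prok_dirac (R : realType) p (Theta : set (p.-tuple R)) (x t0 : p.-tuple R) (e : R) :
  Theta x -> Theta t0 -> 0 < e -> eudist x t0 < e ->
  (prokhorov Theta (\d_x) (\d_t0) <= e%:E)%E.
Proof.
move=> Tx Tt e0 hx; apply: ereal_inf_le; exists e%:E => //; exists e => //.
split => // A mA AT; rewrite !diracE; split; apply: bool_le => //.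
  move=> /set_mem Ax; apply/mem_set; split => //.
  by exists x => //; rewrite eudist_sym.
move=> /set_mem Ax; apply/mem_set; split => //.
by exists t0.
Qed.

Lemma contL (R : realType) p (lam : {measure set (p.-tuple R) -> \bar R})
  (Theta : set (p.-tuple R)) (mTheta : measurable Theta) (theta0 : p.-tuple R)
  (Ht0 : Theta theta0)
  (u : p.-tuple R -> p.-tuple R -> R) (u0 : forall x y, 0 <= u x y)
  (um : forall y, Theta y -> measurable_fun setT (fun th => u th y))
  (hb : forall y, Theta y -> exists2 r : R, 0 < r &
        forall t, eudist t theta0 < r ->
          forall e : R, 0 < e -> exists2 del : R, 0 < del &
            forall s, eudist s t < del -> `|u y s - u y t| < e)
  (r1 : R) (r10 : 0 < r1)
  (hc : (\int[lam]_(th in Theta)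
            ereal_sup [set (u th y)%:E | y in ballT Theta theta0 r1] < +oo)%E)
  (eta : R) (eta0 : 0 < eta) :
  exists2 del : R, 0 < del & forall x, Theta x -> eudist x theta0 < del ->
    (\int[lam]_(th in Theta) `|(u th x)%:E - (u th theta0)%:E| <= eta%:E)%E.
Proof.
case: (pselect (exists2 del : R, 0 < del & forall x, Theta x -> eudist x theta0 < del ->
    (\int[lam]_(th in Theta) `|(u th x)%:E - (u th theta0)%:E| <= eta%:E)%E)) => // hneg.
have H : forall n : nat, exists x, [/\ Theta x, eudist x theta0 < r1 / n.+1%:R &
    (eta%:E < \int[lam]_(th in Theta) `|(u th x)%:E - (u th theta0)%:E|)%E].
  move=> n; apply: contrapT => hn; apply: hneg; exists (r1 / n.+1%:R).
    by rewrite divr_gt0.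
  move=> x Tx dx; rewrite leNgt; apply/negP => hlt; apply: hn; by exists x.
have [xs hxs] := choice H.
have xsT n : Theta (xs n) by case: (hxs n).
have dxs n : eudist (xs n) theta0 < r1 / n.+1%:R by case: (hxs n).
have xsB n : ballT Theta theta0 r1 (xs n).
  split => //; apply: lt_le_trans (dxs n) _.
  by rewrite ler_pdivrMr // ler_peMr ?ler1n // ltW.
pose g := fun th => esups (fun n => (u th (xs n))%:E) 0.
have mf n : measurable_fun Theta (EFin \o (fun th => u th (xs n))).
  apply/measurable_realfun.measurable_EFinP.
  by apply: (measurable_funS measurableT) => //; exact: um.
have mf0 : measurable_fun Theta (EFin \o (fun th => u th theta0)).
  apply/measurable_realfun.measurable_EFinP.
  by apply: (measurable_funS measurableT) => //; exact: um.
have fcv : {ae lam, forall th, Theta th ->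
    (fun n => (u th (xs n))%:E) @ \oo --> (u th theta0)%:E}.
  apply: aeW => th Tth; apply: cvg_EFin; first exact: nearW.
  apply/cvgrPdist_lt => e e0.
  have [r r0 cont] := hb th Tth.
  have [del del0 hdel] := cont theta0 ltac:(by rewrite eudist_xx) e e0.
  near=> n => /=; rewrite distrC; apply: hdel.
  apply: lt_le_trans (dxs n) _.
  near: n; exists (Num.trunc (del^-1 * r1)) => // n /= Nn.
  rewrite ler_pdivrMr// -ler_pdivrMl//.
  apply: le_trans (ltW (truncnS_gt _)) _.
  by rewrite ler_nat ltnS.
have g0 th : (0 <= g th)%E.
  apply: (@le_trans _ _ (u th (xs 0%N))%:E); first by rewrite lee_fin.
  by apply: ereal_sup_ubound; exists 0%N.
have ig : lam.-integrable Theta g.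
  apply/integrableP; split.
    exact: (measurable_realfun.measurable_fun_esups
              (f := fun n th => (u th (xs n))%:E)).
  apply: le_lt_trans hc; apply: le_int_set => //.
  - move=> th; apply: (@le_trans _ _ (u th theta0)%:E); first by rewrite lee_fin.
    by apply: ereal_sup_ubound; exists theta0 => //; split => //; rewrite eudist_xx.
  - move=> th Tth; rewrite gee0_abs//.
    by apply: le_ereal_sup => _ [k _ <-]; exists (xs k).
have fg : {ae lam, forall th n, Theta th -> (`|(u th (xs n))%:E| <= g th)%E}.
  apply: aeW => th n _; rewrite gee0_abs ?lee_fin//.
  by apply: ereal_sup_ubound; exists n => /=.
have [_ hcv _] := @dominated_convergence _ _ _ lam Theta mTheta _ _ g mf mf0 fcv ig fg.
move/fine_cvgP : hcv => [finn cvr].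
move/cvgrPdist_lt : cvr => /(_ eta eta0) cvr.
have [N _ hN] := filterI finn cvr.
have [fN dN] := hN N (leqnn N).
case: (hxs N) => _ _; rewrite ltNge => /negP []; move: fN dN => /= fN dN.
rewrite -(fineK fN) lee_fin; apply: le_trans (ltW dN).
by rewrite sub0r normrN ler_norm.
Unshelve. all: by end_near.
Qed.

Lemma alg (R : realType) (a b a0 b0 eta e : R) : 0 <= a -> a <= b -> 0 <= a0 -> a0 <= b0 -> 0 < b0 ->
  `|a - a0| <= eta -> `|b - b0| <= eta -> eta <= b0/2 -> eta * 4 <= e * b0 ->
  a / b <= a0 / b0 + e /\ a0 / b0 <= a / b + e.
Proof.
move=> a0' ab a00 ab0 b00 /ler_normlP [h1 h2] /ler_normlP [h3 h4] he1 he2.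
have bp : 0 < b by lra.
have k1 : (a / b) * b = a by rewrite mulfVK // gt_eqF.
have k2 : (a0 / b0) * b0 = a0 by rewrite mulfVK // gt_eqF.
set x := a / b in k1 *; set y := a0 / b0 in k2 *.
have x0 : 0 <= x by rewrite /x divr_ge0 // ltW.
have y0 : 0 <= y by rewrite /y divr_ge0 // ltW.
have x1 : x <= 1 by rewrite /x ler_pdivrMr // mul1r.
have y1 : y <= 1 by rewrite /y ler_pdivrMr // mul1r.
split; nra.
Qed.

Local Open Scope ring_scope.

Definition Iu {R : realType} {p} (lam : {measure set (p.-tuple R) -> \bar R})
  (u : p.-tuple R -> p.-tuple R -> R) (y : p.-tuple R) (B : set (p.-tuple R)) : \bar R :=
  \int[lam]_(th in B) (u th y)%:E.

Theorem proposition5 (R : realType) (d : measure_display) (Omega : measurableType d)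
  (P : probability Omega R) (p : nat)
  (lam : {measure set (p.-tuple R) -> \bar R}) (hlam : is_lebesgue lam)
  (Theta : set (p.-tuple R)) (mTheta : measurable Theta)
  (theta0 : p.-tuple R) (Htheta0 : Theta theta0)
  (thstar : nat -> Omega -> p.-tuple R)
  (mthstar : forall T, measurable_fun setT (thstar T))
  (thstarT : forall T w, Theta (thstar T w))
  (cvg_thstar : forall e : R, 0 < e ->
     (fun T => P [set w | e < eudist (thstar T w) theta0]) @ \oo --> 0%E) :
  (forall e : R, 0 < e ->
     (fun T => outerP P [set w | (e%:E < prokhorov Theta (\d_(thstar T w)) (\d_theta0))%E])
       @ \oo --> 0%E)
  /\
  (forall u : p.-tuple R -> p.-tuple R -> R,
     (forall x y, 0 <= u x y) ->
     (* (a) *)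
     (forall x y, ~ (Theta x /\ Theta y) -> u x y = 0) ->
     (forall y, Theta y -> measurable_fun setT (fun th => u th y)) ->
     (* (b) *)
     (forall y, Theta y -> exists2 r : R, 0 < r &
        forall t, eudist t theta0 < r ->
          forall e : R, 0 < e -> exists2 del : R, 0 < del &
            forall s, eudist s t < del -> `|u y s - u y t| < e) ->
     (* (c) *)
     (exists2 r1 : R, 0 < r1 &
        (\int[lam]_(th in Theta)
            ereal_sup [set (u th y)%:E | y in ballT Theta theta0 r1] < +oo)%E) ->
     (* (d) *)
     (exists2 r2 : R, 0 < r2 &
        forall y, ballT Theta theta0 r2 y ->
          (0 < \int[lam]_(th in Theta) (u th y)%:E)%E) ->
     forall e : R, 0 < e ->
       (fun T => outerP P [set w |
           (e%:E < prokhorov Theta (post lam Theta u (thstar T w))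
                                   (post lam Theta u theta0))%E])
         @ \oo --> 0%E).
Proof.
split.
  move=> e e0; apply: (@conclude _ _ _ P _ theta0 thstar mthstar cvg_thstar
    (fun T w => prokhorov Theta (\d_(thstar T w)) (\d_theta0)) e).
  exists e => // T w hw.
  exact: prok_dirac.
move=> u u0 ua um hb [r1 r10 hc] [r2 r20 hd] e e0.
have Ige0 y B : (0 <= Iu lam u y B)%E by apply: integral_ge0 => th _; rewrite lee_fin.
have mono y B C : B `<=` C -> (Iu lam u y B <= Iu lam u y C)%E.
  by move=> BC; apply: le_int_set => // th; rewrite lee_fin.
have fin y B : ballT Theta theta0 r1 y -> B `<=` Theta -> Iu lam u y B \is a fin_num.
  move=> yB BT; rewrite ge0_fin_numE//; apply: le_lt_trans hc.
  apply: le_int_set => //.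
  - by move=> th; rewrite lee_fin.
  - move=> th; apply: (@le_trans _ _ (u th theta0)%:E); first by rewrite lee_fin.
    by apply: ereal_sup_ubound; exists theta0 => //; split => //; rewrite eudist_xx.
  - by move=> th _; apply: ereal_sup_ubound; exists y.
have B01 : ballT Theta theta0 r1 theta0 by split => //; rewrite eudist_xx.
have B02 : ballT Theta theta0 r2 theta0 by split => //; rewrite eudist_xx.
pose b0 := fine (Iu lam u theta0 Theta).
have b0p : 0 < b0.
  by apply: fine_gt0; rewrite hd //= -ge0_fin_numE // fin.
pose eta := Num.min (b0 / 2) (e * b0 / 4).
have eta0 : 0 < eta by rewrite lt_min !divr_gt0 // mulr_gt0.
have [del del0 hdel] := @contL _ _ lam Theta mTheta theta0 Htheta0 u u0 um hb r1 r10 hc eta eta0.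
apply: (@conclude _ _ _ P _ theta0 thstar mthstar cvg_thstar
    (fun T w => prokhorov Theta (post lam Theta u (thstar T w)) (post lam Theta u theta0)) e).
exists (Num.min del r1); first by rewrite lt_min del0 r10.
move=> T w.
rewrite lt_min => /andP [hd1 hd2].
set x := thstar T w.
have Tx : Theta x by exact: thstarT.
have xB : ballT Theta theta0 r1 x by [].
have key B : measurable B -> B `<=` Theta ->
    `|fine (Iu lam u x B) - fine (Iu lam u theta0 B)| <= eta.
  move=> mB BT.
  have fx := fin x B xB BT; have f0 := fin theta0 B B01 BT.
  suff hE : (`|Iu lam u x B - Iu lam u theta0 B| <= eta%:E)%E.
    move: hE fx f0; move: (Iu lam u x B) (Iu lam u theta0 B) => [a| |] [b| |] //=.
  have mfx : measurable_fun B (EFin \o (fun th => u th x)).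
    apply/measurable_EFinP; apply: (measurable_funS measurableT) => //; exact: um.
  have mf0 : measurable_fun B (EFin \o (fun th => u th theta0)).
    apply/measurable_EFinP; apply: (measurable_funS measurableT) => //; exact: um.
  have ix : lam.-integrable B (EFin \o (fun th => u th x)).
    apply/integrableP; split => //; rewrite -ge0_fin_numE //.
      by under eq_integral do rewrite gee0_abs ?lee_fin//; exact: fx.
    by apply: integral_ge0.
  have i0 : lam.-integrable B (EFin \o (fun th => u th theta0)).
    apply/integrableP; split => //; rewrite -ge0_fin_numE //.
      by under eq_integral do rewrite gee0_abs ?lee_fin//; exact: f0.
    by apply: integral_ge0.
  rewrite /Iu -integralB //.
  apply: le_trans (le_abse_integral _ mB (emeasurable_funB mfx mf0)) _.
  apply: le_trans (hdel x Tx hd1); apply: le_int_set => //.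
have hA A : measurable A -> A `<=` Theta ->
    (fine (Iu lam u x A) / fine (Iu lam u x Theta) <=
     fine (Iu lam u theta0 A) / b0 + e) /\
    (fine (Iu lam u theta0 A) / b0 <=
     fine (Iu lam u x A) / fine (Iu lam u x Theta) + e).
  move=> mA AT; apply: (@alg R _ _ _ b0 eta e) => //.
  - exact: fine_ge0.
  - by apply: fine_le; [exact: fin|exact: fin|exact: mono].
  - exact: fine_ge0.
  - by apply: fine_le; [exact: fin|exact: fin|exact: mono].
  - exact: key.
  - exact: key.
  - by rewrite /eta ge_min lexx.
  - have : eta <= e * b0 / 4 by rewrite /eta ge_min lexx orbT.
    move: (e * b0) => eb h; lra.
have Ae A : A `<=` Theta -> A `<=` enlarge Theta A e.
  by move=> AT y Ay; split; [exact: AT|exists y => //; rewrite eudist_xx].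
have eT A : enlarge Theta A e `<=` Theta by move=> y [].
apply: ereal_inf_le; exists e%:E => //; exists e => //.
split => // A mA AT; rewrite /post -!/(Iu lam u _ _) -/b0.
have [h1 h2] := hA A mA AT.
split; rewrite -EFinD lee_fin.
  apply: le_trans h1 _; rewrite lerD2r; apply: ler_wpM2r.
    by rewrite invr_ge0 ltW.
  apply: fine_le; [exact: (fin _ _ B01 AT)|exact: (fin _ _ B01 (eT A))|].
  exact: mono (Ae A AT).
apply: le_trans h2 _; rewrite lerD2r; apply: ler_wpM2r.
  by rewrite invr_ge0; apply: fine_ge0.
apply: fine_le; [exact: (fin _ _ xB AT)|exact: (fin _ _ xB (eT A))|].
exact: mono (Ae A AT).
Qed.
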